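(* A topological group $G$ is metrizable if and only if $G$ is a Fréchet–Urysohn $\aleph$-space.
   Context: A $k$-network in $X$ is a family $\mathcal N$ of subsets such that whenever $K\subset U$ with $K$ compact and $U$ open, there is a finite $\mathcal F\subset\mathcal N$ with $K\subset\bigcup\mathcal F\subset U$; an $\aleph$-space is a regular space with a $\sigma$-locally finite $k$-network. *)

(* Defs.v *)
From Stdlib Require Import Reals List.
Open Scope R_scope.

Definition set (X : Type) := X -> Prop.

Record topology (X : Type) := Topology {
  open : set X -> Prop;
  open_full : open (fun _ => True);
  open_inter : forall U V, open U -> open V -> open (fun x => U x /\ V x);
  open_union : forall F : set X -> Prop,
    (forall U, F U -> open U) -> open (fun x => exists U, F U /\ U x)
}.
Arguments open {X} t U.

Section Topo.
Context {X : Type} (T : topology X).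

Definition closure (A : set X) : set X :=
  fun x => forall U, open T U -> U x -> exists y, U y /\ A y.

Definition converges (s : nat -> X) (x : X) : Prop :=
  forall U, open T U -> U x -> exists N, forall n, (N <= n)%nat -> U (s n).

Definition frechet_urysohn : Prop :=
  forall (A : set X) (x : X), closure A x ->
    exists s : nat -> X, (forall n, A (s n)) /\ converges s x.

Definition compact (K : set X) : Prop :=
  forall F : set X -> Prop, (forall U, F U -> open T U) ->
    (forall x, K x -> exists U, F U /\ U x) ->
    exists l : list (set X), (forall U, In U l -> F U) /\
      (forall x, K x -> exists U, In U l /\ U x).

Definition k_network (N : set X -> Prop) : Prop :=
  forall K U : set X, compact K -> open T U -> (forall x, K x -> U x) ->
    exists l : list (set X), (forall A, In A l -> N A) /\
      (forall x, K x -> exists A, In A l /\ A x) /\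
      (forall A, In A l -> forall x, A x -> U x).

Definition locally_finite (N : set X -> Prop) : Prop :=
  forall x, exists V, open T V /\ V x /\
    exists l : list (set X),
      forall A, N A -> (exists y, V y /\ A y) -> In A l.

Definition sigma_locally_finite (N : set X -> Prop) : Prop :=
  exists Nn : nat -> (set X -> Prop),
    (forall A, N A <-> exists n, Nn n A) /\ (forall n, locally_finite (Nn n)).

Definition T1 : Prop :=
  forall x y : X, x <> y -> exists U, open T U /\ U y /\ ~ U x.

Definition regular : Prop :=
  T1 /\ forall (x : X) (U : set X), open T U -> U x ->
    exists V, open T V /\ V x /\ (forall y, closure V y -> U y).

Definition aleph_space : Prop :=
  regular /\ exists N : set X -> Prop, sigma_locally_finite N /\ k_network N.

Definition is_metric (d : X -> X -> R) : Prop :=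
  (forall x y, 0 <= d x y) /\ (forall x y, d x y = 0 <-> x = y) /\
  (forall x y, d x y = d y x) /\ (forall x y z, d x z <= d x y + d y z).

Definition metrizable : Prop :=
  exists d : X -> X -> R, is_metric d /\
    forall U : set X, open T U <->
      (forall x, U x -> exists eps, 0 < eps /\ forall y, d x y < eps -> U y).
End Topo.

(* Topological group: a group (mul, inv, e) whose multiplication is jointly
   continuous (continuity for the product topology, unfolded) and whose
   inversion is continuous. *)
Definition is_topological_group {G : Type} (T : topology G)
  (mul : G -> G -> G) (inv : G -> G) (e : G) : Prop :=
  (forall x y z, mul x (mul y z) = mul (mul x y) z) /\
  (forall x, mul e x = x) /\ (forall x, mul x e = x) /\
  (forall x, mul (inv x) x = e) /\ (forall x, mul x (inv x) = e) /\
  (forall x y W, open T W -> W (mul x y) ->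
     exists U V, open T U /\ open T V /\ U x /\ V y /\
       (forall u v, U u -> V v -> W (mul u v))) /\
  (forall W, open T W -> open T (fun x => W (inv x))).

(* Main.v *)
Require Import Defs.
From Stdlib Require Import Reals List Lra Lia Classical ClassicalEpsilon FunctionalExtensionality PropExtensionality Cantor.
Open Scope R_scope.

Lemma fchoice {A B : Type} (P : A -> B -> Prop) : (forall a, exists b, P a b) -> exists f, forall a, P a (f a).
Proof.
  intros H. exists (fun a => proj1_sig (constructive_indefinite_description _ (H a))).
  intros a. exact (proj2_sig (constructive_indefinite_description _ (H a))).
Qed.

Section Gen.
Context {X : Type} (T : topology X).

Lemma set_ext (U V : set X) : (forall x, U x <-> V x) -> U = V.
Proof. intros H; apply functional_extensionality; intros x; apply propositional_extensionality; auto. Qed.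

Lemma open_ext (U V : set X) : (forall x, U x <-> V x) -> open T U -> open T V.
Proof. intros H HU. rewrite <- (set_ext U V H). exact HU. Qed.

Lemma open_local (U : set X) :
  (forall x, U x -> exists O, open T O /\ O x /\ forall y, O y -> U y) -> open T U.
Proof.
  intros H.
  apply (open_ext (fun x => exists O, (open T O /\ forall y, O y -> U y) /\ O x)).
  - intros x; split.
    + intros [O [[_ HO] Ox]]; auto.
    + intros Ux; destruct (H x Ux) as [O [HO [Ox HOU]]]; exists O; auto.
  - apply open_union. intros O [HO _]; exact HO.
Qed.

Lemma open_empty : open T (fun _ => False).
Proof. apply open_local. intros x []. Qed.

End Gen.

Lemma einv_pos n : 0 < / (INR n + 1).
Proof. apply Rinv_0_lt_compat. pose proof (pos_INR n); lra. Qed.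

Lemma einv_small eps : 0 < eps -> exists n, / (INR n + 1) < eps.
Proof.
  intros He. destruct (archimed_cor1 eps He) as [N [H1 H2]].
  exists N. eapply Rle_lt_trans; [|exact H1].
  apply Rinv_le_contravar. apply lt_0_INR; lia. lra.
Qed.

Lemma einv_anti m n : (m <= n)%nat -> / (INR n + 1) <= / (INR m + 1).
Proof.
  intros H. apply Rinv_le_contravar. pose proof (pos_INR m); lra.
  apply le_INR in H; lra.
Qed.

Section PartA.
Context {X : Type} (T : topology X) (d : X -> X -> R) (Hd : is_metric d)
  (Hop : forall U : set X, open T U <->
      (forall x, U x -> exists eps, 0 < eps /\ forall y, d x y < eps -> U y)).

Lemma d_pos x y : 0 <= d x y. Proof. apply Hd. Qed.
Lemma d_refl x : d x x = 0. Proof. apply Hd; reflexivity. Qed.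
Lemma d_sym x y : d x y = d y x. Proof. apply Hd. Qed.
Lemma d_tri x y z : d x z <= d x y + d y z. Proof. apply Hd. Qed.
Lemma d_zero x y : d x y = 0 -> x = y. Proof. apply Hd. Qed.

Lemma ball_open x r : open T (fun y => d x y < r).
Proof.
  apply Hop. intros y Hy. exists (r - d x y). split. lra.
  intros z Hz. pose proof (d_tri x y z). lra.
Qed.

Lemma metric_FU : frechet_urysohn T.
Proof.
  intros A x Hx.
  assert (H : forall n, exists y, A y /\ d x y < / (INR n + 1)).
  { intros n. destruct (Hx _ (ball_open x (/ (INR n + 1)))) as [y [H1 H2]].
    rewrite d_refl; apply einv_pos. eauto. }
  destruct (fchoice _ H) as [s Hs]. exists s; split. intros n; apply Hs.
  intros U HU Ux. destruct (proj1 (Hop U) HU x Ux) as [eps [He HB]].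
  destruct (einv_small eps He) as [N HN]. exists N. intros n Hn. apply HB.
  pose proof (einv_anti _ _ Hn). destruct (Hs n). lra.
Qed.

Lemma metric_regular : regular T.
Proof.
  split.
  - intros x y Hxy. exists (fun z => d y z < d x y). split. apply ball_open.
    split. rewrite d_refl. destruct (Rle_lt_or_eq _ _ (d_pos x y)) as [h|h]; auto.
    exfalso; apply Hxy, d_zero; auto.
    rewrite d_sym; lra.
  - intros x U HU Ux. destruct (proj1 (Hop U) HU x Ux) as [eps [He HB]].
    exists (fun y => d x y < eps/2). split. apply ball_open. split. rewrite d_refl; lra.
    intros y Hy. destruct (Hy _ (ball_open y (eps/2))) as [z [Hz1 Hz2]].
    rewrite d_refl; lra. apply HB. pose proof (d_tri x z y). rewrite (d_sym z y) in *. lra.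
Qed.

(* Stone-type construction *)
Variable (Rw : X -> X -> Prop) (Rtot : forall a b, Rw a b \/ Rw b a)
  (Rant : forall a b, Rw a b -> Rw b a -> a = b)
  (Rmin : forall P : X -> Prop, (exists x, P x) -> exists m, P m /\ forall y, P y -> Rw m y).

Definition eA (n : nat) : R := / (INR n + 1).

Lemma sel_ex (r : R) : 0 < r -> exists s : X -> X, forall y, d (s y) y < r /\ forall a, d a y < r -> Rw (s y) a.
Proof.
  intros Hr. apply (fchoice (fun y s => d s y < r /\ forall a, d a y < r -> Rw s a)). intros y. apply Rmin. exists y. rewrite d_refl; auto.
Qed.

Definition sel (m : nat) : X -> X :=
  proj1_sig (constructive_indefinite_description _ (sel_ex (eA m) (einv_pos m))).
Lemma sel_spec m y : d (sel m y) y < eA m /\ forall a, d a y < eA m -> Rw (sel m y) a.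
Proof. unfold sel. destruct (constructive_indefinite_description _ _) as [s Hs]; simpl. apply Hs. Qed.

Definition DA (m n : nat) (a : X) : set X := fun z =>
  exists y, d y z < eA n /\ sel m y = a /\ (forall w, d y w < 3 * eA n -> d a w < eA m).

Lemma D_open m n a : open T (DA m n a).
Proof.
  apply Hop. intros z [y [H1 [H2 H3]]]. exists (eA n - d y z). split. lra.
  intros w Hw. exists y. split; auto. pose proof (d_tri y z w). lra.
Qed.

Lemma D_ball m n a z : DA m n a z -> d a z < eA m.
Proof.
  intros [y [H1 [H2 H3]]]. apply H3. pose proof (einv_pos n). unfold eA in *. lra.
Qed.

Lemma D_cover m x : exists n, DA m n (sel m x) x.
Proof.
  destruct (sel_spec m x) as [H1 _].
  destruct (einv_small ((eA m - d (sel m x) x) / 3)) as [n Hn]. lra.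
  exists n. exists x. split. rewrite d_refl. apply einv_pos. split; auto.
  intros w Hw. pose proof (d_tri (sel m x) x w). unfold eA in *. lra.
Qed.

Lemma D_disc1 m n a b z1 z2 : Rw a b -> a <> b -> DA m n a z1 -> DA m n b z2 -> eA n <= d z1 z2.
Proof.
  intros Hab Hne [y1 [H11 [H12 H13]]] [y2 [H21 [H22 H23]]].
  assert (Hf : eA m <= d a y2).
  { destruct (Rlt_or_le (d a y2) (eA m)) as [h|h]; auto.
    exfalso. apply Hne. apply Rant; auto. subst b. apply (sel_spec m y2). auto. }
  assert (Hg : 3 * eA n <= d y1 y2).
  { destruct (Rlt_or_le (d y1 y2) (3 * eA n)) as [h|h]; auto. apply H13 in h. lra. }
  pose proof (d_tri y1 z1 y2). pose proof (d_tri z1 z2 y2). rewrite (d_sym z2 y2) in *. lra.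
Qed.

Lemma D_disc m n a b z1 z2 : a <> b -> DA m n a z1 -> DA m n b z2 -> eA n <= d z1 z2.
Proof.
  intros Hne H1 H2. destruct (Rtot a b) as [h|h].
  eapply D_disc1; eauto.
  rewrite d_sym. eapply D_disc1; eauto.
Qed.

Definition NnA (k : nat) : set X -> Prop :=
  fun A => exists a, A = DA (fst (of_nat k)) (snd (of_nat k)) a.

Lemma Nn_lf k : locally_finite T (NnA k).
Proof.
  set (m := fst (of_nat k)). set (n := snd (of_nat k)).
  intros x. exists (fun y => d x y < eA n / 2). split. apply ball_open. split.
  rewrite d_refl. pose proof (einv_pos n). unfold eA; lra.
  destruct (classic (exists a y, d x y < eA n / 2 /\ DA m n a y)) as [[a [y [Hy1 Hy2]]]|Hno].
  - exists (DA m n a :: nil). intros A [b HA] [z [Hz1 Hz2]]. subst A. fold m n in Hz2.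
    left. destruct (classic (a = b)) as [->|Hne]; auto.
    pose proof (D_disc m n a b y z Hne Hy2 Hz2). pose proof (d_tri y x z). rewrite (d_sym y x) in *. lra.
  - exists nil. intros A [b HA] [z [Hz1 Hz2]]. subst A. exfalso. apply Hno. exists b, z; auto.
Qed.

Lemma metric_aleph : aleph_space T.
Proof.
  split. apply metric_regular.
  exists (fun A => exists k, NnA k A). split.
  - exists NnA. split. tauto. apply Nn_lf.
  - intros K U HK HU HKU.
    set (F := fun A => (exists k, NnA k A) /\ open T A /\ forall x, A x -> U x).
    destruct (HK F) as [l [Hl1 Hl2]].
    + intros A [_ [HA _]]; exact HA.
    + intros x Kx. pose proof (HKU x Kx) as Ux.
      destruct (proj1 (Hop U) HU x Ux) as [eps [He HB]].
      destruct (einv_small (eps/2)) as [m Hm]. lra.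
      destruct (D_cover m x) as [n Hn].
      exists (DA m n (sel m x)). split; auto. split.
      * exists (to_nat (m, n)). exists (sel m x). rewrite cancel_of_to. reflexivity.
      * split. apply D_open. intros z Hz. apply HB.
        pose proof (D_ball _ _ _ _ Hz). pose proof (D_ball _ _ _ _ Hn).
        pose proof (d_tri x (sel m x) z). rewrite (d_sym x (sel m x)) in *. unfold eA in *. lra.
    + exists l. split; [|split]; auto.
      intros A HA; apply Hl1 in HA; apply HA.
      intros A HA; apply Hl1 in HA; apply HA.
Qed.

End PartA.

Section PartB1.
Context {G : Type} (T : topology G) (mul : G -> G -> G) (inv : G -> G) (un : G)
  (HG : is_topological_group T mul inv un).

Lemma g_assoc x y z : mul x (mul y z) = mul (mul x y) z. Proof. apply HG. Qed.
Lemma g_idl x : mul un x = x. Proof. apply HG. Qed.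
Lemma g_idr x : mul x un = x. Proof. apply HG. Qed.
Lemma g_invl x : mul (inv x) x = un. Proof. apply HG. Qed.
Lemma g_invr x : mul x (inv x) = un. Proof. apply HG. Qed.
Lemma g_mulc x y W : open T W -> W (mul x y) ->
  exists U V, open T U /\ open T V /\ U x /\ V y /\ (forall u v, U u -> V v -> W (mul u v)).
Proof. apply HG. Qed.
Lemma g_invc W : open T W -> open T (fun x => W (inv x)). Proof. apply HG. Qed.

Lemma g_cancl x y : mul (inv x) (mul x y) = y.
Proof. rewrite g_assoc, g_invl, g_idl; reflexivity. Qed.
Lemma g_cancr x y : mul x (mul (inv x) y) = y.
Proof. rewrite g_assoc, g_invr, g_idl; reflexivity. Qed.
Lemma g_uniq a b : mul a b = un -> b = inv a.
Proof. intros H. rewrite <- (g_cancl a b), H, g_idr. reflexivity. Qed.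
Lemma g_inv_un : inv un = un.
Proof. symmetry. apply g_uniq. apply g_idl. Qed.
Lemma g_inv_inv x : inv (inv x) = x.
Proof. symmetry. apply g_uniq. apply g_invl. Qed.
Lemma g_inv_mul x y : inv (mul x y) = mul (inv y) (inv x).
Proof.
  symmetry. apply g_uniq. rewrite <- g_assoc. rewrite (g_assoc y), g_invr, g_idl. apply g_invr.
Qed.

Lemma open_lmul a W : open T W -> open T (fun y => W (mul a y)).
Proof.
  intros HW. apply open_local. intros y Hy.
  destruct (g_mulc a y W HW Hy) as [P [Q [HP [HQ [Pa [Qy HPQ]]]]]].
  exists Q. split; auto.
Qed.

Lemma conv_const x : converges T (fun _ => x) x.
Proof. intros U _ Ux. exists O; auto. Qed.

Lemma conv_mul s t a b : converges T s a -> converges T t b ->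
  converges T (fun n => mul (s n) (t n)) (mul a b).
Proof.
  intros Hs Ht W HW Wab. destruct (g_mulc a b W HW Wab) as [P [Q [HP [HQ [Pa [Qb HPQ]]]]]].
  destruct (Hs P HP Pa) as [N1 H1]. destruct (Ht Q HQ Qb) as [N2 H2].
  exists (max N1 N2). intros n Hn. apply HPQ; [apply H1|apply H2]; lia.
Qed.

Lemma conv_inv s a : converges T s a -> converges T (fun n => inv (s n)) (inv a).
Proof.
  intros Hs W HW Wa. destruct (Hs _ (g_invc W HW) Wa) as [N HN]. exists N; auto.
Qed.

End PartB1.

Section Top2.
Context {X : Type} (T : topology X).

Lemma hausdorff_of_regular : regular T -> forall x y : X, x <> y ->
  exists P Q, open T P /\ open T Q /\ P x /\ Q y /\ forall g, P g -> Q g -> False.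
Proof.
  intros [H1 Hr] x y Hxy. destruct (H1 x y Hxy) as [U [HU [Uy nUx]]].
  destruct (Hr y U HU Uy) as [V [HV [Vy HVU]]].
  assert (~ closure T V x) as Hc by (intro Hc; apply nUx, HVU, Hc).
  unfold closure in Hc. apply not_all_ex_not in Hc. destruct Hc as [O HO].
  apply imply_to_and in HO. destruct HO as [HO HO']. apply imply_to_and in HO'.
  destruct HO' as [Ox HO'].
  exists O, V. repeat split; auto. intros g Og Vg. apply HO'. exists g; auto.
Qed.

Lemma open_fin_inter (F : nat -> set X) : (forall M, open T (F M)) ->
  forall M0, open T (fun x => forall M, (M <= M0)%nat -> F M x).
Proof.
  intros HF M0. induction M0.
  - apply (open_ext T (F O)). intros x; split.
    + intros H M HM. replace M with O by lia. auto.
    + intros H; apply H; lia.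
    + apply HF.
  - apply (open_ext T (fun x => (forall M, (M <= M0)%nat -> F M x) /\ F (S M0) x)).
    + intros x; split.
      * intros [H1 H2] M HM. destruct (Nat.eq_dec M (S M0)) as [->|h]; auto. apply H1; lia.
      * intros H; split; auto.
    + apply open_inter; auto.
Qed.

Lemma compact_seq (y : nat -> X) x J : converges T y x ->
  Defs.compact T (fun z => z = x \/ exists j, (J <= j)%nat /\ z = y j).
Proof.
  intros Hy F HF Hcov.
  destruct (Hcov x (or_introl eq_refl)) as [U0 [FU0 U0x]].
  destruct (Hy U0 (HF U0 FU0) U0x) as [N0 HN0].
  assert (Hl : forall n, exists l : list (set X), (forall U, In U l -> F U) /\
     forall j, (J <= j)%nat -> (j < n)%nat -> exists U, In U l /\ U (y j)).
  { induction n.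
    - exists nil. split. intros U []. intros j _ h; lia.
    - destruct IHn as [l [Hl1 Hl2]].
      destruct (Nat.le_gt_cases J n) as [hJ|hJ].
      + destruct (Hcov (y n)) as [U [FU Uy]]. right; eauto.
        exists (U :: l). split.
        * intros V [<-|hV]; auto.
        * intros j h1 h2. destruct (Nat.eq_dec j n) as [->|hj].
          exists U; split; auto. left; auto.
          destruct (Hl2 j h1 ltac:(lia)) as [V [hV1 hV2]]. exists V; split; auto. right; auto.
      + exists l. split; auto. intros j h1 h2. apply Hl2; lia. }
  destruct (Hl N0) as [l [Hl1 Hl2]]. exists (U0 :: l). split.
  - intros V [<-|hV]; auto.
  - intros z [->|[j [hj ->]]].
    + exists U0; split; auto. left; auto.
    + destruct (Nat.le_gt_cases N0 j) as [h|h].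
      * exists U0. split. left; auto. apply HN0; auto.
      * destruct (Hl2 j hj h) as [V [hV1 hV2]]. exists V; split; auto. right; auto.
Qed.

Lemma pigeon (L : list (set X)) (y : nat -> X) : forall J,
  (forall j, (J <= j)%nat -> exists A, In A L /\ A (y j)) ->
  exists A, In A L /\ forall J', exists j, (J' <= j)%nat /\ A (y j).
Proof.
  induction L as [|A L IH]; intros J H.
  - destruct (H J (le_n J)) as [A [[] _]].
  - destruct (classic (forall J', exists j, (J' <= j)%nat /\ A (y j))) as [h|h].
    + exists A. split; auto. left; auto.
    + apply not_all_ex_not in h. destruct h as [J0 h].
      destruct (IH (max J J0)) as [B [HB1 HB2]].
      * intros j hj. destruct (H j ltac:(lia)) as [B [[<-|HB] HBy]].
        -- exfalso. apply h. exists j. split; auto. lia.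
        -- exists B; auto.
      * exists B. split; auto. right; auto.
Qed.

End Top2.

Section PartB2.
Context {G : Type} (T : topology G) (mul : G -> G -> G) (inv : G -> G) (un : G)
  (HG : is_topological_group T mul inv un)
  (HFU : frechet_urysohn T) (Hreg : regular T)
  (N : set G -> Prop) (Nn : nat -> set G -> Prop)
  (HNn : forall A, N A <-> exists n, Nn n A) (Hlf : forall n, locally_finite T (Nn n))
  (Hkn : k_network T N).

Definition interior (S : set G) : set G := fun x => exists W, open T W /\ W x /\ forall z, W z -> S z.

Lemma lf_data : exists (Vf : nat -> set G) (lf : nat -> list (set G)),
  forall n, open T (Vf n) /\ Vf n un /\ forall A, Nn n A -> (exists y, Vf n y /\ A y) -> In A (lf n).
Proof.
  destruct (fchoice (fun n (p : set G * list (set G)) => open T (fst p) /\ fst p un /\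
     forall A, Nn n A -> (exists y, fst p y /\ A y) -> In A (snd p))) as [f Hf].
  { intros n. destruct (Hlf n un) as [V [HV [Vu [l Hl]]]]. exists (V, l). simpl; auto. }
  exists (fun n => fst (f n)), (fun n => snd (f n)). exact Hf.
Qed.

Variable (Vf : nat -> set G) (lf : nat -> list (set G))
  (Hvl : forall n, open T (Vf n) /\ Vf n un /\ forall A, Nn n A -> (exists y, Vf n y /\ A y) -> In A (lf n)).

Definition Dq (q : nat) : set G := nth (snd (of_nat q)) (lf (fst (of_nat q))) (fun _ => False).

Lemma cs_star (y : nat -> G) U : converges T y un -> open T U -> U un ->
  exists q, (forall x, Dq q x -> U x) /\ forall J, exists j, (J <= j)%nat /\ Dq q (y j).
Proof.
  intros Hy HU Uu. destruct (Hy U HU Uu) as [J HJ].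
  destruct (Hkn (fun z => z = un \/ exists j, (J <= j)%nat /\ z = y j) U) as [L [HL1 [HL2 HL3]]].
  - apply compact_seq; auto.
  - exact HU.
  - intros x [->|[j [hj ->]]]; auto.
  - destruct (pigeon L y J) as [A [HA HAi]].
    { intros j hj. apply HL2. right; eauto. }
    destruct (proj1 (HNn A) (HL1 A HA)) as [n Hn].
    destruct (Hvl n) as [HV [Vu HVl]].
    destruct (Hy _ HV Vu) as [J1 HJ1].
    assert (Hin : In A (lf n)).
    { apply HVl; auto. destruct (HAi J1) as [j [hj Aj]]. exists (y j); auto. }
    destruct (In_nth _ _ (fun _ => False) Hin) as [i [_ Hi]].
    exists (to_nat (n, i)).
    assert (HD : Dq (to_nat (n, i)) = A) by (unfold Dq; rewrite cancel_of_to; exact Hi).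
    rewrite HD. split.
    + intros x Ax. apply (HL3 A HA x Ax).
    + exact HAi.
Qed.

Definition Bset (M : nat) (U : set G) : set G :=
  fun x => exists q, (q < M)%nat /\ (forall z, Dq q z -> U z) /\ Dq q x.

Lemma fin_avoid (pts : nat -> G) : forall K, exists O, open T O /\ O un /\
  forall k, (k < K)%nat -> pts k <> un -> ~ O (pts k).
Proof.
  induction K.
  - exists (fun _ => True). split. apply open_full. split; auto. intros k h; lia.
  - destruct IHK as [O [HO [Ou HOk]]].
    destruct (classic (pts K = un)) as [h|h].
    + exists O. split; auto. split; auto. intros k hk hne.
      destruct (Nat.eq_dec k K) as [->|hk']. contradiction. apply HOk; auto; lia.
    + destruct (proj1 Hreg (pts K) un h) as [R0 [HR0 [R0u nR0]]].
      exists (fun x => O x /\ R0 x). split. apply open_inter; auto. split; auto.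
      intros k hk hne [Ok Rk]. destruct (Nat.eq_dec k K) as [->|hk']. auto.
      apply (HOk k ltac:(lia) hne Ok).
Qed.

Lemma claim U : open T U -> U un -> exists M, interior (Bset M U) un.
Proof.
  intros HU Uu. apply NNPP. intros Hno.
  assert (Hno' : forall M, ~ interior (Bset M U) un) by (intros M h; apply Hno; eauto).
  clear Hno.
  destruct (classic (exists W, open T W /\ W un /\ forall y, W y -> y = un)) as [[W0 [HW0 [W0u HW0e]]]|Hiso].
  - destruct (cs_star (fun _ => un) U (conv_const T un) HU Uu) as [q [Hq1 Hq2]].
    destruct (Hq2 O) as [j [_ Hj]].
    apply (Hno' (S q)). exists W0. split; auto. split; auto.
    intros z Wz. rewrite (HW0e z Wz). exists q. split; auto.
  - assert (Hcl : closure T (fun y => y <> un) un).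
    { intros W HW Wu. apply NNPP. intros h. apply Hiso. exists W. split; auto. split; auto.
      intros y Wy. apply NNPP. intros hy. apply h. exists y; auto. }
    destruct (HFU _ _ Hcl) as [z [Hz1 Hz2]].
    assert (Hcl2 : forall M, closure T (fun x => ~ Bset M U x) un).
    { intros M W HW Wu. apply NNPP. intros h. apply (Hno' M). exists W. split; auto. split; auto.
      intros x Wx. apply NNPP. intros hx. apply h. exists x; auto. }
    destruct (fchoice (fun M (s : nat -> G) => (forall k, ~ Bset M U (s k)) /\ converges T s un)) as [xs Hxs].
    { intros M. apply (HFU _ _ (Hcl2 M)). }
    set (Aset := fun a => exists M k, a = mul (z M) (xs M k) /\ a <> un).
    assert (HclA : closure T Aset un).
    { intros W HW Wu.
      assert (W (mul un un)) as Wuu by (rewrite (g_idl T mul inv un HG); auto).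
      destruct (g_mulc T mul inv un HG un un W HW Wuu) as [P [Q [HP [HQ [Pu [Qu HPQ]]]]]].
      destruct (Hz2 P HP Pu) as [M HM].
      assert (hz : inv (z M) <> un).
      { intros h. apply (Hz1 M). rewrite <- (g_inv_inv T mul inv un HG (z M)), h.
        apply (g_inv_un T mul inv un HG). }
      destruct (proj1 Hreg (inv (z M)) un hz) as [R0 [HR0 [R0u nR0]]].
      destruct (proj2 (Hxs M) (fun x => Q x /\ R0 x) (open_inter _ _ _ _ HQ HR0) (conj Qu R0u)) as [K HK].
      destruct (HK K (le_n K)) as [HQk HRk].
      exists (mul (z M) (xs M K)). split.
      - apply HPQ; [apply HM; lia | auto].
      - exists M, K. split; auto. intros h. apply nR0.
        rewrite <- (g_uniq T mul inv un HG _ _ h). auto. }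
    destruct (HFU _ _ HclA) as [a [Ha1 Ha2]].
    destruct (fchoice (fun j (p : nat * nat) => a j = mul (z (fst p)) (xs (fst p) (snd p)) /\ a j <> un)) as [mk Hmk].
    { intros j. destruct (Ha1 j) as [M [k Hk]]. exists (M, k). exact Hk. }
    assert (Hrow : forall M, exists O, open T O /\ O un /\
        forall k, mul (z M) (xs M k) <> un -> ~ O (mul (z M) (xs M k))).
    { intros M. destruct (hausdorff_of_regular T Hreg (z M) un (Hz1 M)) as [P [Q [HP [HQ [Pz [Qu HPQ]]]]]].
      assert (Hc : converges T (fun k => mul (z M) (xs M k)) (z M)).
      { pattern (z M) at 2. rewrite <- (g_idr T mul inv un HG (z M)).
        apply (conv_mul T mul inv un HG). apply conv_const. apply Hxs. }
      destruct (Hc P HP Pz) as [K HK].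
      destruct (fin_avoid (fun k => mul (z M) (xs M k)) K) as [O [HO [Ou HOk]]].
      exists (fun x => Q x /\ O x). split. apply open_inter; auto. split; auto.
      intros k hne [Qk Ok]. destruct (Nat.le_gt_cases K k) as [h|h].
      - apply (HPQ _ (HK k h) Qk).
      - apply (HOk k h hne Ok). }
    destruct (fchoice (fun M O => open T O /\ O un /\
        forall k, mul (z M) (xs M k) <> un -> ~ O (mul (z M) (xs M k))) Hrow) as [Or HOr].
    assert (Hbig : forall M0, exists J, forall j, (J <= j)%nat -> (M0 < fst (mk j))%nat).
    { intros M0. destruct (Ha2 _ (open_fin_inter T Or (fun M => proj1 (HOr M)) M0)) as [J HJ].
      { intros M _. apply HOr. }
      exists J. intros j hj. destruct (Nat.le_gt_cases (fst (mk j)) M0) as [h|h]; auto.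
      exfalso. destruct (Hmk j) as [e1 e2]. specialize (HJ j hj _ h). rewrite e1 in HJ, e2.
      apply (proj2 (proj2 (HOr (fst (mk j)))) _ e2 HJ). }
    set (yj := fun j => xs (fst (mk j)) (snd (mk j))).
    assert (Hzz : converges T (fun j => z (fst (mk j))) un).
    { intros W HW Wu. destruct (Hz2 W HW Wu) as [N0 HN0]. destruct (Hbig N0) as [J HJ].
      exists J. intros j hj. apply HN0. specialize (HJ j hj). lia. }
    assert (Hyj : converges T yj un).
    { assert (Heq : yj = fun j => mul (inv (z (fst (mk j)))) (a j)).
      { apply functional_extensionality. intros j. unfold yj. rewrite (proj1 (Hmk j)).
        rewrite (g_cancl T mul inv un HG). reflexivity. }
      rewrite Heq.
      assert (Hg : converges T (fun j => mul (inv (z (fst (mk j)))) (a j)) (mul (inv un) un)).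
      { apply (conv_mul T mul inv un HG). apply (conv_inv T mul inv un HG). exact Hzz. exact Ha2. }
      rewrite (g_inv_un T mul inv un HG), (g_idl T mul inv un HG) in Hg. exact Hg. }
    destruct (cs_star yj U Hyj HU Uu) as [q [Hq1 Hq2]].
    destruct (Hbig q) as [J HJ]. destruct (Hq2 J) as [j [hj Hj]].
    apply (proj1 (Hxs (fst (mk j))) (snd (mk j))). exists q. split; auto.
Qed.

End PartB2.

Section PartB3.
Context {G : Type} (T : topology G) (mul : G -> G -> G) (inv : G -> G) (un : G)
  (HG : is_topological_group T mul inv un) (HT1 : T1 T)
  (V : nat -> set G) (HVo : forall k, open T (V k)) (HVu : forall k, V k un)
  (HVb : forall U, open T U -> U un -> exists k, forall x, V k x -> U x).

Lemma small_nbhd U : open T U -> U un -> exists W, open T W /\ W un /\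
  (forall x, W x -> W (inv x)) /\ (forall a b c, W a -> W b -> W c -> U (mul a (mul b c))).
Proof.
  intros HU Uu.
  assert (U (mul un un)) as H1 by (rewrite (g_idl T mul inv un HG); auto).
  destruct (g_mulc T mul inv un HG un un U HU H1) as [P [Q [HP [HQ [Pu [Qu HPQ]]]]]].
  assert (Q (mul un un)) as H2 by (rewrite (g_idl T mul inv un HG); auto).
  destruct (g_mulc T mul inv un HG un un Q HQ H2) as [P2 [Q2 [HP2 [HQ2 [P2u [Q2u HPQ2]]]]]].
  set (W0 := fun x => P x /\ P2 x /\ Q2 x).
  assert (HW0 : open T W0) by (apply open_inter; auto; apply open_inter; auto).
  exists (fun x => W0 x /\ W0 (inv x)). split; [|split; [|split]].
  - apply open_inter; auto. apply (g_invc T mul inv un HG); auto.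
  - rewrite (g_inv_un T mul inv un HG). unfold W0; auto.
  - intros x [h1 h2]. rewrite (g_inv_inv T mul inv un HG). auto.
  - intros a b c [[Pa _] _] [[_ [P2b _]] _] [[_ [_ Q2c]] _]. apply HPQ; auto.
Qed.

Lemma sn_ex : exists sn : set G -> set G, forall U, open T U -> U un -> open T (sn U) /\ sn U un /\
  (forall x, sn U x -> sn U (inv x)) /\ (forall a b c, sn U a -> sn U b -> sn U c -> U (mul a (mul b c))).
Proof.
  destruct (fchoice (fun U W => open T U -> U un -> open T W /\ W un /\
   (forall x, W x -> W (inv x)) /\ (forall a b c, W a -> W b -> W c -> U (mul a (mul b c))))) as [f Hf].
  { intros U. destruct (classic (open T U /\ U un)) as [[h1 h2]|h].
    - destruct (small_nbhd U h1 h2) as [W HW]. exists W; auto.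
    - exists U. intros h1 h2; tauto. }
  exists f; auto.
Qed.

Variable (sn : set G -> set G) (Hsn : forall U, open T U -> U un -> open T (sn U) /\ sn U un /\
  (forall x, sn U x -> sn U (inv x)) /\ (forall a b c, sn U a -> sn U b -> sn U c -> U (mul a (mul b c)))).

Fixpoint Ws (k : nat) : set G :=
  match k with O => fun _ => True | S k => sn (fun x => Ws k x /\ V k x) end.

Lemma Ws_ou k : open T (Ws k) /\ Ws k un.
Proof.
  induction k; simpl. split; auto. apply open_full.
  destruct IHk. destruct (Hsn (fun x => Ws k x /\ V k x)) as [h1 [h2 _]].
  apply open_inter; auto. split; auto. split; auto.
Qed.

Lemma Ws_sym k x : Ws k x -> Ws k (inv x).
Proof.
  destruct k; simpl; auto. destruct (Ws_ou k). destruct (Hsn (fun x => Ws k x /\ V k x)) as [h1 [h2 [h3 _]]].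
  apply open_inter; auto. split; auto. apply h3.
Qed.

Lemma Ws_triple k a b c : Ws (S k) a -> Ws (S k) b -> Ws (S k) c -> Ws k (mul a (mul b c)) /\ V k (mul a (mul b c)).
Proof.
  destruct (Ws_ou k). intros. destruct (Hsn (fun x => Ws k x /\ V k x)) as [h1 [h2 [h3 h4]]].
  apply open_inter; auto. split; auto. apply h4; auto.
Qed.

Lemma Ws_dec k x : Ws (S k) x -> Ws k x.
Proof.
  intros H. pose proof (proj2 (Ws_ou (S k))).
  rewrite <- (g_idr T mul inv un HG x), <- (g_idr T mul inv un HG un).
  apply (Ws_triple k); auto.
Qed.

Lemma Ws_V k x : Ws (S k) x -> V k x.
Proof.
  intros H. pose proof (proj2 (Ws_ou (S k))).
  rewrite <- (g_idr T mul inv un HG x), <- (g_idr T mul inv un HG un).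
  apply (Ws_triple k); auto.
Qed.

Lemma Ws_mono k m : (k <= m)%nat -> forall x, Ws m x -> Ws k x.
Proof.
  intros H. induction H; auto. intros x hx. apply IHle, Ws_dec, hx.
Qed.

Fixpoint valid (x : G) (l : list (G * nat)) : Prop :=
  match l with nil => True | (z, k) :: l' => Ws k (mul (inv x) z) /\ valid z l' end.
Fixpoint endp (x : G) (l : list (G * nat)) : G :=
  match l with nil => x | (z, _) :: l' => endp z l' end.
Fixpoint cost (l : list (G * nat)) : R :=
  match l with nil => 0 | (_, k) :: l' => (/2)^k + cost l' end.

Lemma half_pos k : 0 < (/2)^k.
Proof. apply pow_lt. lra. Qed.

Lemma cost_nonneg l : 0 <= cost l.
Proof. induction l as [|[z k] l IH]; simpl. lra. pose proof (half_pos k); lra. Qed.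

Lemma valid_app x l1 l2 : valid x (l1 ++ l2) <-> valid x l1 /\ valid (endp x l1) l2.
Proof.
  revert x; induction l1 as [|[z k] l IH]; intros x; simpl. tauto. rewrite IH. tauto.
Qed.
Lemma endp_app x l1 l2 : endp x (l1 ++ l2) = endp (endp x l1) l2.
Proof. revert x; induction l1 as [|[z k] l IH]; intros x; simpl; auto. Qed.
Lemma cost_app l1 l2 : cost (l1 ++ l2) = cost l1 + cost l2.
Proof. induction l1 as [|[z k] l IH]; simpl. lra. rewrite IH; lra. Qed.

Lemma split_chain l : forall t, 0 <= t -> t < cost l ->
  exists l1 z k l2, l = l1 ++ (z, k) :: l2 /\ cost l1 <= t /\ t < cost l1 + (/2)^k.
Proof.
  induction l as [|[z k] l IH]; intros t Ht Hc; simpl in Hc. lra.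
  destruct (Rlt_or_le t ((/2)^k)) as [h|h].
  - exists nil, z, k, l. simpl. split; auto. split; lra.
  - destruct (IH (t - (/2)^k)) as [l1 [z' [k' [l2 [e1 [e2 e3]]]]]]; try lra.
    exists ((z, k) :: l1), z', k', l2. rewrite e1. simpl. split; auto. split; lra.
Qed.

Lemma half_le_inv k j : (/2)^k <= (/2)^j -> (j <= k)%nat.
Proof.
  intros H. destruct (Nat.le_gt_cases j k) as [h|h]; auto. exfalso.
  assert ((/2)^j < (/2)^k).
  { replace j with (k + (j - k))%nat by lia. rewrite pow_add.
    assert ((/2)^(j-k) < 1). { apply pow_lt_1_compat. split; lra. lia. }
    pose proof (half_pos k). nra. }
  lra.
Qed.

Lemma mul3 x u z y : mul (mul (inv x) u) (mul (mul (inv u) z) (mul (inv z) y)) = mul (inv x) y.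
Proof.
  rewrite <- (g_assoc T mul inv un HG (inv u) z), (g_cancr T mul inv un HG z).
  rewrite <- (g_assoc T mul inv un HG (inv x) u), (g_cancr T mul inv un HG u). reflexivity.
Qed.

Lemma key_chain n : forall l x, (length l <= n)%nat -> valid x l ->
  forall m, cost l <= (/2)^(S m) -> Ws m (mul (inv x) (endp x l)).
Proof.
  induction n as [|n IH]; intros l x Hlen Hv m Hc.
  - destruct l; simpl in Hlen; [|lia]. simpl. rewrite (g_invl T mul inv un HG). apply Ws_ou.
  - destruct l as [|p l0].
    + simpl. rewrite (g_invl T mul inv un HG). apply Ws_ou.
    + set (a := cost (p :: l0)).
      assert (Ha : 0 < a).
      { unfold a; destruct p as [z k]; simpl. pose proof (half_pos k); pose proof (cost_nonneg l0); lra. }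
      assert (Hsp := split_chain (p :: l0) (a/2) ltac:(lra) ltac:(unfold a in *; lra)).
      destruct Hsp as [l1 [z [k [l2 [e1 [e2 e3]]]]]].
      rewrite e1 in Hv, Hlen |- *. fold a in e2, e3.
      assert (Hca : a = cost l1 + (/2)^k + cost l2).
      { unfold a. rewrite e1, cost_app. simpl. lra. }
      assert (Hca0 : a <= (/2)^(S m)) by (unfold a; exact Hc).
      clearbody a. clear Hc. rename Hca0 into Hc.
      rewrite length_app in Hlen. simpl in Hlen.
      apply valid_app in Hv. destruct Hv as [Hv1 [Hw Hv2]].
      rewrite endp_app. simpl.
      set (u := endp x l1). fold u in Hw, Hv2.
      pose proof (pow_le_le_half := half_pos).
      assert (H1 : Ws (S m) (mul (inv x) u)).
      { apply (IH l1 x); auto. lia. simpl in Hc |- *. lra. }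
      assert (H3 : Ws (S m) (mul (inv z) (endp z l2))).
      { apply (IH l2 z); auto. lia. pose proof (cost_nonneg l1). simpl in Hc |- *. lra. }
      assert (H2 : Ws (S m) (mul (inv u) z)).
      { apply (Ws_mono (S m) k); auto. apply half_le_inv.
        pose proof (cost_nonneg l1); pose proof (cost_nonneg l2). lra. }
      rewrite <- (mul3 x u z). apply (Ws_triple m); auto.
Qed.

Lemma reverse_chain l : forall x, valid x l -> exists l', valid (endp x l) l' /\ endp (endp x l) l' = x /\ cost l' = cost l.
Proof.
  induction l as [|[z k] l IH]; intros x Hv; simpl.
  - exists nil. simpl. auto.
  - destruct Hv as [Hw Hv]. destruct (IH z Hv) as [l' [H1 [H2 H3]]].
    exists (l' ++ (x, k) :: nil). rewrite valid_app, endp_app, cost_app, H2. simpl.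
    split; [split; auto|split; auto]. split; auto.
    replace (mul (inv z) x) with (inv (mul (inv x) z)). apply Ws_sym; auto.
    rewrite (g_inv_mul T mul inv un HG), (g_inv_inv T mul inv un HG). reflexivity.
    lra.
Qed.

Definition Eset (x y : G) : R -> Prop := fun r => exists l, valid x l /\ endp x l = y /\ r = - cost l.

Lemma Eset_bound x y : bound (Eset x y).
Proof. exists 0. intros r [l [_ [_ ->]]]. pose proof (cost_nonneg l); lra. Qed.
Lemma Eset_ne x y : exists r, Eset x y r.
Proof. exists (- cost ((y, O) :: nil)). exists ((y, O) :: nil). simpl. auto. Qed.

Definition dm (x y : G) : R := - proj1_sig (completeness (Eset x y) (Eset_bound x y) (Eset_ne x y)).

Lemma dm_le x y l : valid x l -> endp x l = y -> dm x y <= cost l.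
Proof.
  intros H1 H2. unfold dm. destruct (completeness _ _ _) as [m [Hm1 Hm2]]. simpl.
  assert (- cost l <= m) by (apply Hm1; exists l; auto). lra.
Qed.

Lemma dm_ge x y c : (forall l, valid x l -> endp x l = y -> c <= cost l) -> c <= dm x y.
Proof.
  intros H. unfold dm. destruct (completeness _ _ _) as [m [Hm1 Hm2]]. simpl.
  assert (m <= - c). { apply Hm2. intros r [l [h1 [h2 ->]]]. specialize (H l h1 h2). lra. }
  lra.
Qed.

Lemma dm_nonneg x y : 0 <= dm x y.
Proof. apply dm_ge. intros l _ _. apply cost_nonneg. Qed.

Lemma dm_sym_le x y : dm y x <= dm x y.
Proof.
  apply dm_ge. intros l Hv He. destruct (reverse_chain l x Hv) as [l' [H1 [H2 H3]]].
  rewrite <- H3. subst y. apply dm_le; auto.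
Qed.

Lemma dm_tri x y z : dm x z <= dm x y + dm y z.
Proof.
  assert (H : forall l1, valid x l1 -> endp x l1 = y -> dm x z - cost l1 <= dm y z).
  { intros l1 H1 H2. apply dm_ge. intros l2 H3 H4.
    assert (dm x z <= cost (l1 ++ l2)).
    { apply dm_le. rewrite valid_app, H2; auto. rewrite endp_app, H2; auto. }
    rewrite cost_app in H. lra. }
  assert (dm x z - dm y z <= dm x y).
  { apply dm_ge. intros l1 H1 H2. specialize (H l1 H1 H2). lra. }
  lra.
Qed.

Lemma dm_small x y m : dm x y < (/2)^(S m) -> Ws m (mul (inv x) y).
Proof.
  intros H. apply NNPP. intros Hn.
  assert ((/2)^(S m) <= dm x y).
  { apply dm_ge. intros l H1 H2. destruct (Rle_or_lt (cost l) ((/2)^(S m))) as [h|h]; [|lra].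
    exfalso. apply Hn. rewrite <- H2. apply (key_chain (length l) l x); auto. }
  lra.
Qed.

Lemma dm_big x y m : Ws m (mul (inv x) y) -> dm x y <= (/2)^m.
Proof.
  intros H. replace ((/2)^m) with (cost ((y, m) :: nil)) by (simpl; lra).
  apply dm_le; simpl; auto.
Qed.

Lemma dm_metric : is_metric dm.
Proof.
  split; [|split; [|split]].
  - apply dm_nonneg.
  - intros x y; split.
    + intros H. assert (Hall : forall k, V k (mul (inv x) y)).
      { intros k. apply Ws_V. apply dm_small. rewrite H. apply half_pos. }
      destruct (classic (mul (inv x) y = un)) as [h|h].
      * rewrite <- (g_cancr T mul inv un HG x y), h, (g_idr T mul inv un HG). reflexivity.
      * exfalso. destruct (HT1 _ _ h) as [U [HU [Uu nU]]].
        destruct (HVb U HU Uu) as [k Hk]. apply nU, Hk, Hall.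
    + intros ->. apply Rle_antisym; [|apply dm_nonneg].
      replace 0 with (cost nil) by reflexivity. apply dm_le; simpl; auto.
  - intros x y. apply Rle_antisym; apply dm_sym_le.
  - apply dm_tri.
Qed.

Lemma dm_open : forall U : set G, open T U <->
  (forall x, U x -> exists eps, 0 < eps /\ forall y, dm x y < eps -> U y).
Proof.
  intros U; split.
  - intros HU x Ux.
    assert (HP : open T (fun g => U (mul x g))) by (apply (open_lmul T mul inv un HG); auto).
    assert (Pu : U (mul x un)) by (rewrite (g_idr T mul inv un HG); auto).
    destruct (HVb _ HP Pu) as [k Hk].
    exists ((/2)^(S (S k))). split. apply half_pos.
    intros y Hy. apply dm_small in Hy. apply Ws_V in Hy. apply Hk in Hy.
    rewrite (g_cancr T mul inv un HG) in Hy. exact Hy.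
  - intros H. apply open_local. intros x Ux. destruct (H x Ux) as [eps [He Hb]].
    destruct (pow_lt_1_zero (/2) ltac:(rewrite Rabs_pos_eq; lra) eps He) as [m Hm].
    specialize (Hm m (le_n m)). rewrite Rabs_pos_eq in Hm by (apply Rlt_le, half_pos).
    exists (fun y => Ws m (mul (inv x) y)). split.
    + apply (open_lmul T mul inv un HG). apply Ws_ou.
    + split. rewrite (g_invl T mul inv un HG). apply Ws_ou.
      intros y Hy. apply Hb. apply dm_big in Hy. lra.
Qed.

Lemma metrizable_B3 : metrizable T.
Proof. exists dm. split. apply dm_metric. apply dm_open. Qed.

End PartB3.

Lemma mask_exists (P : nat -> Prop) M : exists p, forall q, Nat.testbit p q = true <-> ((q < M)%nat /\ P q).
Proof.
  induction M.
  - exists 0%nat. intros q. rewrite Nat.bits_0. split; [discriminate|lia].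
  - destruct IHM as [p Hp]. destruct (classic (P M)) as [h|h].
    + exists (Nat.setbit p M). intros q. rewrite Nat.setbit_iff, Hp. split.
      * intros [->|[h1 h2]]; split; auto; lia.
      * intros [h1 h2]. destruct (Nat.eq_dec M q); auto. right; split; auto; lia.
    + exists p. intros q. rewrite Hp. split.
      * intros [h1 h2]; split; auto; lia.
      * intros [h1 h2]. split; auto. destruct (Nat.eq_dec q M) as [->|]; [contradiction|lia].
Qed.

Lemma interior_open {G} (T : topology G) S : open T (interior T S).
Proof.
  apply open_local. intros x [W [HW [Wx HWS]]]. exists W. split; auto. split; auto.
  intros y Wy. exists W; auto.
Qed.

Theorem partB {G : Type} (T : topology G) (mul : G -> G -> G) (inv : G -> G) (un : G)
  (HG : is_topological_group T mul inv un) :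
  frechet_urysohn T -> aleph_space T -> metrizable T.
Proof.
  intros HFU [Hreg [N [[Nn [HNn Hlf]] Hkn]]].
  destruct (lf_data T un Nn Hlf) as [Vf [lf Hvl]].
  set (C := fun p x => exists q, Nat.testbit p q = true /\ Dq lf q x).
  set (O := fun p => interior T (C p)).
  assert (HOb : forall U, open T U -> U un -> exists p, O p un /\ forall x, O p x -> U x).
  { intros U HU Uu. destruct (claim T mul inv un HG HFU Hreg N Nn HNn Hkn Vf lf Hvl U HU Uu) as [M HM].
    destruct (mask_exists (fun q => forall z, Dq lf q z -> U z) M) as [p Hp].
    assert (HCB : forall x, C p x <-> Bset lf M U x).
    { intros x; split.
      - intros [q [h1 h2]]. apply Hp in h1. exists q. tauto.
      - intros [q [h1 [h2 h3]]]. exists q. split; auto. apply Hp; auto. }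
    exists p. split.
    - destruct HM as [W [HW [Wu HWB]]]. exists W. split; auto. split; auto.
      intros z Wz. apply HCB; auto.
    - intros x [W [HW [Wx HWC]]]. destruct (HWC x Wx) as [q [h1 h2]]. apply Hp in h1.
      apply (proj2 h1); auto. }
  set (V := fun k x => forall p, (p <= k)%nat -> O p un -> O p x).
  destruct (sn_ex T mul inv un HG) as [sn Hsn].
  refine (metrizable_B3 T mul inv un HG (proj1 Hreg) V _ _ _ sn Hsn).
  - intros k. apply (open_fin_inter T (fun p x => O p un -> O p x)).
    intros p. destruct (classic (O p un)) as [h|h].
    + apply (open_ext T (O p)). intros x; tauto. apply interior_open.
    + apply (open_ext T (fun _ => True)). intros x; tauto. apply open_full.
  - intros k p _ h; exact h.
  - intros U HU Uu. destruct (HOb U HU Uu) as [p [h1 h2]]. exists p.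
    intros x Hx. apply h2, Hx; auto.
Qed.

Module WO.
From HB Require Import structures.
From mathcomp Require Import ssreflect ssrfun ssrbool eqtype.
From mathcomp Require Import boolp wochoice.

Definition EqT (X : Type) : Type := X.
HB.instance Definition _ (X : Type) := gen_eqMixin (EqT X).

Lemma wo_exists (X : Type) : exists R : X -> X -> Prop,
  (forall a b, R a b \/ R b a) /\ (forall a b, R a b -> R b a -> a = b) /\
  (forall P : X -> Prop, (exists x, P x) -> exists m, P m /\ forall y, P y -> R m y).
Proof.
have [R wR] := well_ordering_principle (EqT X).
have minP : forall P : X -> Prop, (exists x, P x) -> exists m, P m /\ forall y, P y -> R m y.
  move=> P [x Px].
  have [z [[zP zlb] _]] := wR (fun y : EqT X => `[< P y >]) (ex_intro _ x (introT (asboolP _) Px)).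
  exists z; split; first exact: (asboolW zP).
  by move=> y Py; apply: zlb; apply/asboolP.
have refl : forall a, R a a.
  move=> a; have [m [Hm Hlb]] := minP (fun y => y = a) (ex_intro _ a erefl).
  by rewrite -{1}Hm; apply: Hlb.
exists (fun a b => R a b); split; last split; last exact: minP.
- move=> a b.
  have [m [Hm Hlb]] := minP (fun y => y = a \/ y = b) (ex_intro _ a (or_introl erefl)).
  case: Hm => Hm; subst m; [left|right]; apply: Hlb; auto.
- move=> a b Rab Rba.
  have [z [_ zu]] := wR (fun y : EqT X => `[< y = a \/ y = b >]) (ex_intro _ a (introT (asboolP _) (or_introl erefl))).
  have ha : minimum_of R (fun y : EqT X => `[< y = a \/ y = b >]) a.
    split; first by apply/asboolP; left.
    by move=> y /asboolP [->|->].
  have hb : minimum_of R (fun y : EqT X => `[< y = a \/ y = b >]) b.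
    split; first by apply/asboolP; right.
    by move=> y /asboolP [->|->].
  by rewrite -(zu _ ha) -(zu _ hb).
Qed.

End WO.

Theorem corollary2p3 (G : Type) (T : topology G) (mul : G -> G -> G)
  (inv : G -> G) (e : G) (HG : is_topological_group T mul inv e) :
  metrizable T <-> (frechet_urysohn T /\ aleph_space T).
Proof.
split.
{ intros [d [Hd Hop]]. destruct (WO.wo_exists G) as [Rw [Rt [Ra Rm]]]. split.
  { exact (metric_FU T d Hd Hop). }
  { exact (metric_aleph T d Hd Hop Rw Rt Ra Rm). } }
{ intros [H1 H2]. exact (partB T mul inv e HG H1 H2). }
Qed.
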